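(* Let $\mu\ge0$ and define on $[0,\infty)$ $$\phi(x)=\pi e^{\mu x}Ai(\mu^2+x),\qquad \psi(x)=Ce^{\mu x}Ai(\mu^2+x)+e^{\mu x}Bi(\mu^2+x),$$ with $C=-\frac{\mu Bi(\mu^2)+Bi'(\mu^2)}{\mu Ai(\mu^2)+Ai'(\mu^2)}$. Then $\phi$ is strictly decreasing and $\psi$ is strictly increasing on $[0,\infty)$.
   Context: $Ai,Bi$ are the standard Airy functions, linearly independent solutions of $u''=xu$; on $[0,\infty)$, $Ai$ is positive and decreasing with $Ai(x)\to0$, and $Bi$ is positive and increasing with $Bi(x)\to\infty$ as $x\to\infty$. *)

(* Defs.v *)
From Stdlib Require Import Reals.
From Coquelicot Require Import Coquelicot.
Open Scope R_scope.

Definition Gamma (s : R) : R :=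
  RInt_gen (fun t => Rpower t (s - 1) * exp (- t)) (at_right 0) (Rbar_locally p_infty).

(* Taylor coefficients of the two basic solutions f, g of u'' = x u
   with f(0)=1, f'(0)=0 and g(0)=0, g'(0)=1: a_(n+3) = a_n / ((n+3)(n+2)). *)
Fixpoint airy_f_coef (n : nat) : R :=
  match n with
  | O => 1
  | S O => 0
  | S (S O) => 0
  | S (S (S m) as k) => airy_f_coef m / (INR (S k) * INR k)
  end.

Fixpoint airy_g_coef (n : nat) : R :=
  match n with
  | O => 0
  | S O => 1
  | S (S O) => 0
  | S (S (S m) as k) => airy_g_coef m / (INR (S k) * INR k)
  end.

Definition airy_f (x : R) : R := PSeries airy_f_coef x.
Definition airy_g (x : R) : R := PSeries airy_g_coef x.

(* Ai(0) = 1/(3^(2/3) Gamma(2/3)),  -Ai'(0) = 1/(3^(1/3) Gamma(1/3)) *)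
Definition airy_c1 : R := / (Rpower 3 (2/3) * Gamma (2/3)).
Definition airy_c2 : R := / (Rpower 3 (1/3) * Gamma (1/3)).

(* Standard Airy functions (Abramowitz–Stegun 10.4.2–10.4.3). *)
Definition Ai (x : R) : R := airy_c1 * airy_f x - airy_c2 * airy_g x.
Definition Bi (x : R) : R := sqrt 3 * (airy_c1 * airy_f x + airy_c2 * airy_g x).

(* Main.v *)
Require Import Defs.
From Stdlib Require Import Reals Lra Psatz Classical Arith Lia.
From Coquelicot Require Import Coquelicot.
Open Scope R_scope.


Lemma mvt_strict (f df : R -> R) a b : a < b ->
  (forall t, a <= t <= b -> is_derive f t (df t)) ->
  exists c, a < c < b /\ f b - f a = df c * (b - a).
Proof.
  intros Hab Hd.
  destruct (MVT_cor2 f df a b Hab) as [c [Hc1 Hc2]].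
  - intros c Hc. apply is_derive_Reals. now apply Hd.
  - exists c; split; auto.
Qed.

Lemma incr_le (f df : R -> R) a b : a <= b ->
  (forall t, a <= t <= b -> is_derive f t (df t)) ->
  (forall t, a < t < b -> 0 <= df t) -> f a <= f b.
Proof.
  intros Hab Hd Hp. destruct (Req_dec a b) as [->|Hne]; [lra|].
  destruct (mvt_strict f df a b) as [c [Hc E]]; try lra; auto.
  specialize (Hp c Hc). nra.
Qed.

Lemma incr_lt (f df : R -> R) a b : a < b ->
  (forall t, a <= t <= b -> is_derive f t (df t)) ->
  (forall t, a < t < b -> 0 < df t) -> f a < f b.
Proof.
  intros Hab Hd Hp.
  destruct (mvt_strict f df a b) as [c [Hc E]]; try lra; auto.
  specialize (Hp c Hc). nra.
Qed.

Lemma lower_slope (f df : R -> R) a b m : a <= b ->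
  (forall t, a <= t <= b -> is_derive f t (df t)) ->
  (forall t, a < t < b -> m <= df t) -> f a + m * (b - a) <= f b.
Proof.
  intros Hab Hd Hp.
  assert (H := incr_le (fun t => f t - m * t) (fun t => df t - m) a b Hab).
  simpl in H. cut (f a - m * a <= f b - m * b). lra.
  apply H.
  - intros t Ht. apply (is_derive_minus f (fun t => m * t)); auto.
    auto_derive; auto; ring.
  - intros t Ht. specialize (Hp t Ht). lra.
Qed.

Lemma deq (f : R -> R) x l l' : is_derive f x l -> l = l' -> is_derive f x l'.
Proof. intros H ->; exact H. Qed.

Lemma dmul (f g : R -> R) x df dg : is_derive f x df -> is_derive g x dg ->
  is_derive (fun t => f t * g t) x (df * g x + f x * dg).
Proof. intros H1 H2. apply (is_derive_mult f g x df dg H1 H2). intros; apply Rmult_comm. Qed.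

Lemma dsq (f : R -> R) x df : is_derive f x df ->
  is_derive (fun t => f t ^ 2) x (2 * f x * df).
Proof. intros H. eapply deq. apply (is_derive_pow f 2 x df H). simpl; ring. Qed.

Lemma dexp (f : R -> R) x df : is_derive f x df ->
  is_derive (fun t => exp (f t)) x (df * exp (f x)).
Proof. intros H. eapply deq. apply (is_derive_comp exp f x (exp (f x)) df).
  auto_derive; auto; ring. exact H. reflexivity. Qed.

Lemma dplus (f g : R -> R) x df dg : is_derive f x df -> is_derive g x dg ->
  is_derive (fun t => f t + g t) x (df + dg).
Proof. intros H1 H2. apply (is_derive_plus f g x df dg H1 H2). Qed.

Lemma dminus (f g : R -> R) x df dg : is_derive f x df -> is_derive g x dg ->
  is_derive (fun t => f t - g t) x (df - dg).
Proof. intros H1 H2. apply (is_derive_minus f g x df dg H1 H2). Qed.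

Lemma dlin (a b x : R) : is_derive (fun t => a * t + b) x a.
Proof. auto_derive; auto; ring. Qed.

Lemma dconst (a x : R) : is_derive (fun _ => a) x 0.
Proof. auto_derive; auto. Qed.

Lemma dscal (f : R -> R) (k x df : R) : is_derive f x df -> is_derive (fun t => k * f t) x (k * df).
Proof. apply is_derive_scal. Qed.

Lemma dlin0 (a x : R) : is_derive (fun t => a * t) x a.
Proof. auto_derive; auto; ring. Qed.

Lemma dopp (f : R -> R) x df : is_derive f x df -> is_derive (fun t => - f t) x (- df).
Proof. intros H. apply (is_derive_opp f x df H). Qed.

Ltac req := match goal with |- @eq _ ?a ?b => change (@eq R a b); ring end.
Ltac reqf := match goal with |- @eq _ ?a ?b => change (@eq R a b); field end.


Definition sol (u u1 : R -> R) :=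
  forall x, 0 <= x -> is_derive u x (u1 x) /\ is_derive u1 x (x * u x).

Lemma sol_unique u u1 x0 : sol u u1 -> 0 <= x0 -> u x0 = 0 -> u1 x0 = 0 ->
  forall x, 0 <= x -> u x = 0.
Proof.
  intros Hs Hx0 E0 E1 x Hx.
  set (X := Rmax x x0). set (k := 1 + X).
  assert (HX1 : x <= X) by apply Rmax_l. assert (HX2 : x0 <= X) by apply Rmax_r.
  set (E := fun t => u t ^ 2 + u1 t ^ 2).
  set (dE := fun t => 2 * (1 + t) * u t * u1 t).
  assert (HdE : forall t, 0 <= t -> is_derive E t (dE t)).
  { intros t Ht. destruct (Hs t Ht) as [D1 D2]. unfold E, dE.
    eapply deq. apply dplus; apply dsq; [exact D1|exact D2]. change (2 * u t * u1 t + 2 * u1 t * (t * u t) = 2 * (1 + t) * u t * u1 t); ring. }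
  assert (Hb : forall t, 0 <= t <= X -> Rabs (dE t) <= k * E t).
  { intros t Ht. unfold dE, E, k.
    assert (0 <= (u t - u1 t)^2) by apply pow2_ge_0. assert (0 <= (u t + u1 t)^2) by apply pow2_ge_0.
    apply Rabs_le; split; nra. }
  assert (E0' : E x0 = 0) by (unfold E; rewrite E0, E1; ring).
  assert (Epos : forall t, 0 <= E t) by (intros; unfold E; nra).
  assert (Ex : E x = 0).
  { destruct (Rle_lt_dec x0 x) as [Hle|Hlt].
    - assert (H := incr_le (fun t => - (E t * exp (- k * t)))
          (fun t => - (dE t * exp (- k * t) + E t * (- k * exp (- k * t)))) x0 x Hle).
      simpl in H.
      assert (0 < exp (- k * x)) by apply exp_pos.
      assert (0 <= E x * exp (- k * x)) by (apply Rmult_le_pos; auto; lra).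
      assert (E x * exp (- k * x) <= 0).
      { cut (- (E x0 * exp (- k * x0)) <= - (E x * exp (- k * x))).
        rewrite E0'; lra. apply H.
        - intros t Ht. apply (dopp (fun t => E t * exp (- k * t))). eapply deq.
          { apply (dmul E (fun t => exp (- k * t))). apply HdE; lra.
            apply (dexp (fun t => - k * t)). apply dlin0. } req.
        - intros t Ht. assert (HH := Hb t ltac:(lra)). apply Rabs_le_between in HH.
          assert (0 < exp (- k * t)) by apply exp_pos. nra. }
      nra.
    - assert (H := incr_le (fun t => (E t * exp (k * t)))
          (fun t => (dE t * exp (k * t) + E t * (k * exp (k * t)))) x x0 (Rlt_le _ _ Hlt)).
      simpl in H.
      assert (0 < exp (k * x)) by apply exp_pos.
      assert (0 <= E x * exp (k * x)) by (apply Rmult_le_pos; auto; lra).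
      assert (E x * exp (k * x) <= 0).
      { cut (E x * exp (k * x) <= (E x0 * exp (k * x0))).
        rewrite E0'; lra. apply H.
        - intros t Ht. eapply deq.
          { apply (dmul E (fun t => exp (k * t))). apply HdE; lra.
            apply (dexp (fun t => k * t)). apply dlin0. } req.
        - intros t Ht. assert (HH := Hb t ltac:(lra)). apply Rabs_le_between in HH.
          assert (0 < exp (k * t)) by apply exp_pos. nra. }
      nra. }
  unfold E in Ex. nra.
Qed.


Lemma sol_prod_neg u u1 M : sol u u1 -> (forall x, 0 <= x -> Rabs (u x) <= M) -> 0 < u 0 ->
  forall x0, 0 <= x0 -> u x0 * u1 x0 < 0.
Proof.
  intros Hs HM H0 x0 Hx0. apply Rnot_le_lt; intro Hp.
  set (p := fun t => u t * u1 t).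
  set (dp := fun t => u1 t ^ 2 + t * u t ^ 2).
  assert (Hdp : forall t, 0 <= t -> is_derive p t (dp t)).
  { intros t Ht. destruct (Hs t Ht) as [D1 D2]. eapply deq.
    { apply (dmul u u1); eauto. } unfold dp; req. }
  assert (Hdq : forall t, 0 <= t -> is_derive (fun t => u t ^ 2) t (2 * p t)).
  { intros t Ht. destruct (Hs t Ht) as [D1 D2]. eapply deq.
    { apply (dsq u); eauto. } unfold p; req. }
  assert (Hpinc : forall a b, x0 <= a <= b -> p a <= p b).
  { intros a b Hab. apply (incr_le p dp); try lra.
    intros t Ht. apply Hdp; lra. intros t Ht. unfold dp.
    assert (0 <= u t ^ 2) by apply pow2_ge_0. assert (0 <= u1 t ^ 2) by apply pow2_ge_0. nra. }
  assert (Hpnn : forall t, x0 <= t -> 0 <= p t).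
  { intros t Ht. assert (p x0 <= p t) by (apply Hpinc; lra). unfold p in *. lra. }
  assert (Hsq : forall a b, x0 <= a <= b -> u a ^ 2 <= u b ^ 2).
  { intros a b Hab. apply (incr_le (fun t => u t ^ 2) (fun t => 2 * p t)); try lra.
    intros t Ht. apply Hdq; lra. intros t Ht. assert (0 <= p t) by (apply Hpnn; lra). lra. }
  set (x1 := x0 + 1).
  destruct (Req_dec (u x1) 0) as [Z|NZ].
  - assert (Zx0 : u x0 = 0).
    { assert (u x0 ^ 2 <= u x1 ^ 2) by (apply Hsq; unfold x1; lra). rewrite Z in H.
      assert (0 <= u x0 ^ 2) by apply pow2_ge_0. nra. }
    destruct (mvt_strict u u1 x0 x1) as [c [Hc Ec]]. unfold x1; lra.
    { intros t Ht. apply Hs; lra. }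
    rewrite Z, Zx0 in Ec. assert (Uc : u1 c = 0) by (unfold x1 in Ec; lra).
    assert (Zc : u c = 0).
    { assert (u c ^ 2 <= u x1 ^ 2) by (apply Hsq; lra). rewrite Z in H.
      assert (0 <= u c ^ 2) by apply pow2_ge_0. nra. }
    assert (u 0 = 0) by (apply (sol_unique u u1 c); auto; lra). lra.
  - set (c := u x1 ^ 2).
    assert (Hc : 0 < c) by (unfold c; apply pow2_gt_0; auto).
    assert (HM0 : 0 <= M) by (specialize (HM 0 (Rle_refl 0)); assert (0 <= Rabs (u 0)) by apply Rabs_pos; lra).
    assert (Hp1 : forall t, x1 <= t -> c * (t - x1) <= p t).
    { intros t Ht. assert (H := lower_slope p dp x1 t c Ht).
      assert (0 <= p x1) by (apply Hpnn; unfold x1; lra).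
      cut (p x1 + c * (t - x1) <= p t). lra.
      apply H. intros s Hs'. apply Hdp. unfold x1 in *; lra.
      intros s Hs'. unfold dp. assert (c <= u s ^ 2) by (apply Hsq; unfold x1 in *; lra).
      assert (0 <= u1 s ^ 2) by apply pow2_ge_0. unfold x1 in *. nra. }
    set (x2 := x1 + 1).
    set (T := x2 + (M ^ 2 + 1) / (2 * c)).
    assert (HT : u x2 ^ 2 + 2 * c * (T - x2) <= u T ^ 2).
    { apply (lower_slope (fun t => u t ^ 2) (fun t => 2 * p t)).
      unfold T. assert (0 < (M ^ 2 + 1) / (2 * c)) by (apply Rdiv_lt_0_compat; nra). lra.
      intros s Hs'. apply Hdq. unfold x2, x1 in *; lra.
      intros s Hs'. assert (c * (s - x1) <= p s) by (apply Hp1; unfold x2 in *; lra).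
      unfold x2 in *. nra. }
    assert (E2 : 2 * c * (T - x2) = M ^ 2 + 1) by (unfold T; field; lra).
    assert (0 <= u x2 ^ 2) by apply pow2_ge_0.
    assert (HuT : Rabs (u T) <= M).
    { apply HM. unfold T, x2, x1. assert (0 < (M ^ 2 + 1) / (2 * c)) by (apply Rdiv_lt_0_compat; nra). lra. }
    assert (u T ^ 2 <= M ^ 2).
    { replace (u T ^ 2) with (Rabs (u T) ^ 2) by (apply pow2_abs).
      assert (0 <= Rabs (u T)) by apply Rabs_pos. nra. }
    lra.
Qed.

Lemma pos_of_nonzero (u : R -> R) : continuity u -> 0 < u 0 ->
  (forall x, 0 <= x -> u x <> 0) -> forall x, 0 <= x -> 0 < u x.
Proof.
  intros Hc H0 Hnz x Hx. apply Rnot_le_lt; intro Hle.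
  destruct (IVT_gen u 0 x 0 Hc) as [z [Hz Ez]].
  - split. apply Rle_trans with (u x). apply Rmin_r. lra.
    apply Rle_trans with (u 0). lra. apply Rmax_l.
  - apply (Hnz z). rewrite Rmin_left in Hz by lra. lra. exact Ez.
Qed.

Lemma sol_sign u u1 M : sol u u1 -> continuity u -> (forall x, 0 <= x -> Rabs (u x) <= M) -> 0 < u 0 ->
  forall x, 0 <= x -> 0 < u x /\ u1 x < 0.
Proof.
  intros Hs Hc HM H0.
  assert (Hn := sol_prod_neg u u1 M Hs HM H0).
  assert (Hp : forall x, 0 <= x -> 0 < u x).
  { apply pos_of_nonzero; auto. intros x Hx E. specialize (Hn x Hx). rewrite E in Hn. lra. }
  intros x Hx. split. auto. specialize (Hn x Hx). specialize (Hp x Hx). nra.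
Qed.

Lemma sol_decr u u1 : sol u u1 -> (forall x, 0 <= x -> u1 x < 0) ->
  forall a b, 0 <= a <= b -> u b <= u a.
Proof.
  intros Hs Hn a b Hab. cut (- u a <= - u b). lra.
  apply (incr_le (fun t => - u t) (fun t => - u1 t)); try lra.
  intros t Ht. apply dopp. apply Hs. lra. intros t Ht. specialize (Hn t ltac:(lra)). lra.
Qed.

Lemma sol_small u u1 : sol u u1 -> (forall x, 0 <= x -> 0 < u x /\ u1 x < 0) ->
  forall eps, 0 < eps -> exists X, 0 <= X /\ forall t, X <= t -> u t < eps.
Proof.
  intros Hs Hsg eps He.
  assert (Hd := sol_decr u u1 Hs (fun x Hx => proj2 (Hsg x Hx))).
  destruct (classic (exists X, 0 <= X /\ u X < eps)) as [[X [HX HuX]]|NE].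
  - exists X. split; auto. intros t Ht. assert (u t <= u X) by (apply Hd; lra). lra.
  - exfalso.
    assert (Hge : forall t, 0 <= t -> eps <= u t).
    { intros t Ht. apply Rnot_lt_le. intro Hlt. apply NE. exists t; auto. }
    set (T := 1 + (Rabs (u1 1) + 1) / eps).
    assert (HT : 1 < T) by (unfold T; assert (0 < (Rabs (u1 1) + 1) / eps) by (apply Rdiv_lt_0_compat; [assert (0 <= Rabs (u1 1)) by apply Rabs_pos|]; lra); lra).
    assert (H := lower_slope u1 (fun t => t * u t) 1 T eps (Rlt_le _ _ HT)).
    assert (u1 1 + eps * (T - 1) <= u1 T).
    { apply H. intros t Ht. apply Hs; lra. intros t Ht.
      assert (eps <= u t) by (apply Hge; lra). nra. }
    assert (eps * (T - 1) = Rabs (u1 1) + 1) by (unfold T; field; lra).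
    assert (- Rabs (u1 1) <= u1 1) by (assert (H9 := Rle_abs (- u1 1)); rewrite Rabs_Ropp in H9; lra).
    assert (u1 T < 0) by (apply Hsg; lra). lra.
Qed.

Lemma sol_h_neg u u1 mu : sol u u1 -> (forall x, 0 <= x -> 0 < u x /\ u1 x < 0) -> 0 <= mu ->
  forall t, mu ^ 2 <= t -> mu * u t + u1 t < 0.
Proof.
  intros Hs Hsg Hmu t0 Ht0. apply Rnot_le_lt; intro Hh.
  set (k := fun t => exp (- mu * t) * (mu * u t + u1 t)).
  set (dk := fun t => exp (- mu * t) * ((t - mu ^ 2) * u t)).
  assert (Hdk : forall t, 0 <= t -> is_derive k t (dk t)).
  { intros t Ht. destruct (Hs t Ht) as [D1 D2]. eapply deq.
    { apply (dmul (fun t => exp (- mu * t)) (fun t => mu * u t + u1 t)).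
      apply (dexp (fun t => - mu * t)). apply dlin0.
      apply (dplus (fun t => mu * u t) u1). apply dscal; eauto. eauto. }
    unfold dk; req. }
  assert (Hmu2 : 0 <= mu ^ 2) by apply pow2_ge_0.
  set (t1 := t0 + 1).
  assert (Hk1 : k t0 < k t1).
  { apply (incr_lt k dk). unfold t1; lra. intros t Ht. apply Hdk; lra.
    intros t Ht. unfold dk. apply Rmult_lt_0_compat. apply exp_pos.
    apply Rmult_lt_0_compat. lra. apply Hsg; lra. }
  assert (Hk0 : 0 <= k t0) by (unfold k; apply Rmult_le_pos; [left; apply exp_pos|lra]).
  set (d := k t1).
  assert (Hkt : forall t, t1 <= t -> d <= k t).
  { intros t Ht. apply (incr_le k dk); auto. intros s Hs'. apply Hdk; unfold t1 in *; lra.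
    intros s Hs'. unfold dk. apply Rmult_le_pos. left; apply exp_pos.
    apply Rmult_le_pos. unfold t1 in *; lra. left; apply Hsg; unfold t1 in *; lra. }
  assert (Hd : 0 < d) by (unfold d; lra).
  destruct (sol_small u u1 Hs Hsg (d / (mu + 1))) as [X [HX HuX]].
  { apply Rdiv_lt_0_compat; lra. }
  set (t := Rmax X t1).
  assert (Ht1 : t1 <= t) by apply Rmax_r. assert (HtX : X <= t) by apply Rmax_l.
  assert (Hut : u t < d / (mu + 1)) by auto.
  assert (Hkt' := Hkt t Ht1). unfold k in Hkt'.
  assert (Hexp : exp (- mu * t) <= 1).
  { rewrite <- exp_0. destruct (Req_dec mu 0) as [->|]. right; f_equal; ring.
    left; apply exp_increasing. unfold t1 in *. nra. }
  assert (Hpos : 0 < exp (- mu * t)) by apply exp_pos.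
  assert (Hh2 : d <= mu * u t + u1 t).
  { set (h := mu * u t + u1 t) in *.
    assert (0 <= h).
    { apply Rnot_lt_le; intro Hn. assert (exp (- mu * t) * h < 0).
      { rewrite <- (Rmult_0_r (exp (- mu * t))). apply Rmult_lt_compat_l; lra. } lra. }
    assert (exp (- mu * t) * h <= 1 * h) by (apply Rmult_le_compat_r; lra). lra. }
  assert (Hsgt := Hsg t ltac:(unfold t1 in *; lra)).
  assert (mu * u t <= mu * (d / (mu + 1))) by (apply Rmult_le_compat_l; lra).
  assert (mu * (d / (mu + 1)) < d) by (apply Rmult_lt_reg_r with (mu + 1); [lra|]; field_simplify; lra).
  lra.
Qed.

Lemma sol_W_pos y y1 mu : sol y y1 -> (forall x, 0 <= x -> 0 < y x) -> 0 <= mu ->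
  mu * y (mu ^ 2) + y1 (mu ^ 2) = 0 -> forall t, mu ^ 2 < t -> 0 < mu * y t + y1 t.
Proof.
  intros Hs Hp Hmu E0 t Ht.
  set (k := fun t => exp (- mu * t) * (mu * y t + y1 t)).
  set (dk := fun t => exp (- mu * t) * ((t - mu ^ 2) * y t)).
  assert (Hmu2 : 0 <= mu ^ 2) by apply pow2_ge_0.
  assert (Hdk : forall t, 0 <= t -> is_derive k t (dk t)).
  { intros s Hs0. destruct (Hs s Hs0) as [D1 D2]. eapply deq.
    { apply (dmul (fun t => exp (- mu * t)) (fun t => mu * y t + y1 t)).
      apply (dexp (fun t => - mu * t)). apply dlin0.
      apply (dplus (fun t => mu * y t) y1). apply dscal; eauto. eauto. }
    unfold dk; req. }
  assert (H : k (mu ^ 2) < k t).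
  { apply (incr_lt k dk); auto. intros s Hs0. apply Hdk; lra.
    intros s Hs0. unfold dk. apply Rmult_lt_0_compat. apply exp_pos.
    apply Rmult_lt_0_compat. lra. apply Hp; lra. }
  unfold k in H. rewrite E0, Rmult_0_r in H.
  assert (0 < exp (- mu * t)) by apply exp_pos.
  apply Rnot_le_lt; intro Hn. assert (exp (- mu * t) * (mu * y t + y1 t) <= 0).
  { rewrite <- (Rmult_0_r (exp (- mu * t))). apply Rmult_le_compat_l; lra. } lra.
Qed.

Lemma sol_grow v v1 : sol v v1 -> continuity v -> 0 < v 0 -> 0 < v1 0 ->
  forall x, 0 <= x -> 0 < v x /\ 0 < v1 x.
Proof.
  intros Hs Hc H0 H1.
  assert (Hp : forall x, 0 <= x -> v 0 * v1 0 <= v x * v1 x).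
  { intros x Hx. apply (incr_le (fun t => v t * v1 t) (fun t => v1 t ^ 2 + t * v t ^ 2)); auto.
    intros t Ht. destruct (Hs t ltac:(lra)) as [D1 D2]. eapply deq.
    { apply (dmul v v1); eauto. } req.
    intros t Ht. assert (0 <= v t ^ 2) by apply pow2_ge_0. assert (0 <= v1 t ^ 2) by apply pow2_ge_0. nra. }
  assert (Hpos : forall x, 0 <= x -> 0 < v x).
  { apply pos_of_nonzero; auto. intros x Hx E. specialize (Hp x Hx). rewrite E in Hp.
    assert (0 < v 0 * v1 0) by nra. lra. }
  intros x Hx. split; auto. specialize (Hp x Hx). specialize (Hpos x Hx).
  assert (0 < v 0 * v1 0) by nra. nra.
Qed.


Lemma dshift (f : R -> R) c x df : is_derive f (c + x) df -> is_derive (fun t => f (c + t)) x df.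
Proof. intros H. eapply deq. apply (is_derive_comp f (fun t => c + t)). exact H.
  auto_derive; auto. simpl. change (1 * df = df). ring. Qed.

Lemma final_abs (A A1 B B1 : R -> R) mu : 0 <= mu -> sol A A1 -> sol B B1 ->
  (forall x, 0 <= x -> 0 < A x /\ A1 x < 0) -> (forall x, 0 <= x -> 0 < B x /\ 0 < B1 x) ->
  let C := - ((mu * B (mu ^ 2) + B1 (mu ^ 2)) / (mu * A (mu ^ 2) + A1 (mu ^ 2))) in
  (forall x y, 0 <= x -> x < y -> PI * exp (mu * y) * A (mu ^ 2 + y) < PI * exp (mu * x) * A (mu ^ 2 + x)) /\
  (forall x y, 0 <= x -> x < y ->
     C * exp (mu * x) * A (mu ^ 2 + x) + exp (mu * x) * B (mu ^ 2 + x) <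
     C * exp (mu * y) * A (mu ^ 2 + y) + exp (mu * y) * B (mu ^ 2 + y)).
Proof.
  intros Hmu HA HB HAs HBs C.
  assert (Hmu2 : 0 <= mu ^ 2) by apply pow2_ge_0.
  assert (Hh := sol_h_neg A A1 mu HA HAs Hmu).
  assert (HD : mu * A (mu ^ 2) + A1 (mu ^ 2) < 0) by (apply Hh; lra).
  split.
  - intros x y Hx Hxy.
    cut (- (PI * exp (mu * x) * A (mu ^ 2 + x)) < - (PI * exp (mu * y) * A (mu ^ 2 + y))). lra.
    apply (incr_lt (fun t => - (PI * exp (mu * t) * A (mu ^ 2 + t)))
      (fun t => - (PI * exp (mu * t) * (mu * A (mu ^ 2 + t) + A1 (mu ^ 2 + t))))); auto.
    + intros t Ht. apply (dopp (fun t => PI * exp (mu * t) * A (mu ^ 2 + t))). eapply deq.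
      { apply (dmul (fun t => PI * exp (mu * t)) (fun t => A (mu ^ 2 + t))).
        apply dscal. apply (dexp (fun t => mu * t)). apply dlin0.
        apply dshift. apply HA. lra. }
      req.
    + intros t Ht. assert (0 < PI * exp (mu * t)) by (apply Rmult_lt_0_compat; [apply PI_RGT_0|apply exp_pos]).
      assert (mu * A (mu ^ 2 + t) + A1 (mu ^ 2 + t) < 0) by (apply Hh; lra). nra.
  - assert (HC : 0 < C).
    { unfold C. assert (0 < mu * B (mu ^ 2) + B1 (mu ^ 2)).
      { destruct (HBs (mu ^ 2) Hmu2). nra. }
      replace (- ((mu * B (mu ^ 2) + B1 (mu ^ 2)) / (mu * A (mu ^ 2) + A1 (mu ^ 2)))) with
        ((mu * B (mu ^ 2) + B1 (mu ^ 2)) / (- (mu * A (mu ^ 2) + A1 (mu ^ 2)))) by (field; lra).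
      apply Rdiv_lt_0_compat; lra. }
    set (y := fun t => C * A t + B t). set (y1 := fun t => C * A1 t + B1 t).
    assert (Hy : sol y y1).
    { intros t Ht. destruct (HA t Ht) as [A1' A2']. destruct (HB t Ht) as [B1' B2']. split.
      - apply (dplus (fun t => C * A t) B). apply dscal; auto. auto.
      - eapply deq. apply (dplus (fun t => C * A1 t) B1). apply dscal; eauto. eauto. unfold y; req. }
    assert (Hyp : forall x, 0 <= x -> 0 < y x).
    { intros x Hx. unfold y. destruct (HAs x Hx), (HBs x Hx). nra. }
    assert (HW0 : mu * y (mu ^ 2) + y1 (mu ^ 2) = 0).
    { unfold y, y1, C. field. lra. }
    assert (HW := sol_W_pos y y1 mu Hy Hyp Hmu HW0).
    intros x z Hx Hxz.
    apply (incr_lt (fun t => C * exp (mu * t) * A (mu ^ 2 + t) + exp (mu * t) * B (mu ^ 2 + t))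
      (fun t => exp (mu * t) * (mu * y (mu ^ 2 + t) + y1 (mu ^ 2 + t)))); auto.
    + intros t Ht. eapply deq.
      { apply (dplus (fun t => C * exp (mu * t) * A (mu ^ 2 + t)) (fun t => exp (mu * t) * B (mu ^ 2 + t))).
        apply (dmul (fun t => C * exp (mu * t)) (fun t => A (mu ^ 2 + t))).
        apply dscal. apply (dexp (fun t => mu * t)). apply dlin0.
        apply dshift. apply HA. lra.
        apply (dmul (fun t => exp (mu * t)) (fun t => B (mu ^ 2 + t))).
        apply (dexp (fun t => mu * t)). apply dlin0.
        apply dshift. apply HB. lra. }
      unfold y, y1; req.
    + intros t Ht. apply Rmult_lt_0_compat. apply exp_pos. apply HW. lra.
Qed.


Definition airy_rec (a : nat -> R) :=
  a 2%nat = 0 /\ forall m, a (S (S (S m))) = a m / (INR (S (S (S m))) * INR (S (S m))).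

Lemma f_rec : airy_rec airy_f_coef.
Proof. split; [reflexivity|intros m; reflexivity]. Qed.
Lemma g_rec : airy_rec airy_g_coef.
Proof. split; [reflexivity|intros m; reflexivity]. Qed.

Lemma term_le_sum (t : nat -> R) (N n : nat) : (forall k, 0 <= t k) -> (n <= N)%nat -> t n <= sum_f_R0 t N.
Proof.
  intros Hp Hn. induction N.
  - assert (n = 0%nat) by lia. subst. simpl. lra.
  - destruct (Nat.eq_dec n (S N)) as [->|Hne].
    + simpl. assert (0 <= sum_f_R0 t N). { clear -Hp. induction N; simpl. apply Hp. specialize (Hp (S N)). lra. } 
      specialize (Hp (S N)). lra.
    + simpl. specialize (IHN ltac:(lia)). specialize (Hp (S N)). lra.
Qed.

Lemma rec_bounded a r : airy_rec a -> 0 <= r -> exists M, forall n, Rabs (a n * r ^ n) <= M.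
Proof.
  intros [_ Hr] Hr0.
  destruct (INR_unbounded (r ^ 3)) as [N HN].
  set (t := fun n => Rabs (a n * r ^ n)).
  exists (sum_f_R0 t (N + 2)).
  intro n. induction n as [n IH] using (well_founded_induction lt_wf).
  destruct (le_lt_dec n (N + 2)) as [Hle|Hlt].
  - apply (term_le_sum t (N + 2) n); auto. intros; unfold t; apply Rabs_pos.
  - destruct n as [|[|[|m]]]; try lia.
    assert (IHm := IH m ltac:(lia)).
    apply Rle_trans with (Rabs (a m * r ^ m)); auto.
    rewrite Hr. 
    assert (HN' : INR N <= INR m) by (apply le_INR; lia).
    assert (Hpos : 0 < INR (S (S (S m))) * INR (S (S m))).
    { apply Rmult_lt_0_compat; apply lt_0_INR; lia. }
    assert (Hbig : r ^ 3 <= INR (S (S (S m))) * INR (S (S m))).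
    { rewrite !S_INR. assert (0 <= INR m) by apply pos_INR. nra. }
    replace (r ^ S (S (S m))) with (r ^ 3 * r ^ m) by (simpl; ring).
    replace (a m / (INR (S (S (S m))) * INR (S (S m))) * (r ^ 3 * r ^ m)) with ((a m * r ^ m) * (r ^ 3 / (INR (S (S (S m))) * INR (S (S m))))) by (unfold Rdiv; ring).

    rewrite Rabs_mult. rewrite (Rabs_pos_eq (_ / _)).
    2:{ apply Rdiv_le_0_compat; [apply pow_le; auto|lra]. }
    assert (r ^ 3 / (INR (S (S (S m))) * INR (S (S m))) <= 1).
    { set (X := INR (S (S (S m))) * INR (S (S m))) in *. unfold Rdiv. apply Rmult_le_reg_r with X; auto. rewrite Rmult_assoc, Rinv_l, Rmult_1_r, Rmult_1_l; lra. }
    assert (0 <= Rabs (a m * r ^ m)) by apply Rabs_pos. nra.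
Qed.

Lemma rec_radius a x : airy_rec a -> Rbar_lt (Rabs x) (CV_radius a).
Proof.
  intros Ha. destruct (CV_radius_bounded a) as [Hub _].
  assert (H := Hub (Rabs x + 1)). 
  assert (Hin : exists M, forall n, Rabs (a n * (Rabs x + 1) ^ n) <= M).
  { apply rec_bounded; auto. assert (0 <= Rabs x) by apply Rabs_pos. lra. }
  specialize (H Hin). destruct (CV_radius a); simpl in *; auto; lra.
Qed.

Lemma rec_deriv2 a x : airy_rec a ->
  is_derive (PSeries (PS_derive a)) x (x * PSeries a x).
Proof.
  intros Ha. eapply deq. apply is_derive_PSeries. rewrite CV_radius_derive. apply rec_radius; auto.
  rewrite <- PSeries_incr_1. apply PSeries_ext. destruct Ha as [H2 Hr].
  intros [|n]; unfold PS_derive, PS_incr_1.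
  - rewrite H2. change (zero) with 0. ring.
  - rewrite Hr. rewrite !S_INR. field. assert (0 <= INR n) by apply pos_INR. lra.
Qed.

Lemma rec_deriv1 a x : airy_rec a -> is_derive (PSeries a) x (PSeries (PS_derive a) x).
Proof. intros Ha. apply is_derive_PSeries. apply rec_radius; auto. Qed.

Lemma rec_cont a : airy_rec a -> continuity (PSeries a).
Proof. intros Ha x. apply PSeries_continuity. apply rec_radius; auto. Qed.

Definition Ai1 x := airy_c1 * PSeries (PS_derive airy_f_coef) x - airy_c2 * PSeries (PS_derive airy_g_coef) x.
Definition Bi1 x := sqrt 3 * (airy_c1 * PSeries (PS_derive airy_f_coef) x + airy_c2 * PSeries (PS_derive airy_g_coef) x).

Lemma Ai_d1 x : is_derive Ai x (Ai1 x).
Proof. unfold Ai, Ai1, airy_f, airy_g. apply (dminus (fun x => airy_c1 * PSeries airy_f_coef x)); apply dscal; apply rec_deriv1; [apply f_rec|apply g_rec]. Qed.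
Lemma Ai_d2 x : is_derive Ai1 x (x * Ai x).
Proof. unfold Ai, Ai1, airy_f, airy_g. eapply deq.
  apply (dminus (fun x => airy_c1 * PSeries (PS_derive airy_f_coef) x)); apply dscal; apply rec_deriv2; [apply f_rec|apply g_rec]. req. Qed.
Lemma Bi_d1 x : is_derive Bi x (Bi1 x).
Proof. unfold Bi, Bi1, airy_f, airy_g. apply dscal. apply (dplus (fun x => airy_c1 * PSeries airy_f_coef x)); apply dscal; apply rec_deriv1; [apply f_rec|apply g_rec]. Qed.
Lemma Bi_d2 x : is_derive Bi1 x (x * Bi x).
Proof. unfold Bi, Bi1, airy_f, airy_g. eapply deq. apply dscal.
  apply (dplus (fun x => airy_c1 * PSeries (PS_derive airy_f_coef) x)); apply dscal; apply rec_deriv2; [apply f_rec|apply g_rec]. req. Qed.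

Lemma Ai_cont : continuity Ai.
Proof. intro x. unfold Ai. apply continuity_pt_minus; apply continuity_pt_scal;
  apply rec_cont; [apply f_rec|apply g_rec]. Qed.
Lemma Bi_cont : continuity Bi.
Proof. intro x. unfold Bi. apply continuity_pt_scal. apply continuity_pt_plus; apply continuity_pt_scal;
  apply rec_cont; [apply f_rec|apply g_rec]. Qed.

Lemma Ai_0 : Ai 0 = airy_c1.
Proof. unfold Ai, airy_f, airy_g. rewrite !PSeries_0. simpl. ring. Qed.
Lemma Ai1_0 : Ai1 0 = - airy_c2.
Proof. unfold Ai1. rewrite !PSeries_0. unfold PS_derive. simpl. ring. Qed.
Lemma Bi_0 : Bi 0 = sqrt 3 * airy_c1.
Proof. unfold Bi, airy_f, airy_g. rewrite !PSeries_0. simpl. ring. Qed.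
Lemma Bi1_0 : Bi1 0 = sqrt 3 * airy_c2.
Proof. unfold Bi1. rewrite !PSeries_0. unfold PS_derive. simpl. ring. Qed.


Definition Iinf (g : R -> R) := real (Lim_seq (fun n => RInt g 0 (INR n))).

Definition good (g : R -> R) (c : R) :=
  (forall s, continuous g s) /\ (forall s, 0 <= s -> Rabs (g s) <= c * exp (- s)).

Lemma cont_of_ex (f : R -> R) x : ex_derive f x -> @continuous R_UniformSpace R_UniformSpace f x.
Proof. intros H. exact (@ex_derive_continuous R_AbsRing R_NormedModule f x H). Qed.

Lemma exRInt (g : R -> R) a b : (forall s, continuous g s) -> ex_RInt g a b.
Proof. intros H. apply (@ex_RInt_continuous R_CompleteNormedModule). intros; apply H. Qed.

Lemma RInt_exp c a b : RInt (fun s => c * exp (- s)) a b = c * (exp (- a) - exp (- b)).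
Proof.
  assert (H : is_RInt (fun s => c * exp (- s)) a b (minus ((fun s => - c * exp (- s)) b) ((fun s => - c * exp (- s)) a))).
  { apply (@is_RInt_derive R_CompleteNormedModule (fun s => - c * exp (- s))).
    intros x _. auto_derive. auto. ring.
    intros x _. apply cont_of_ex. auto_derive. auto. }
  rewrite (is_RInt_unique _ _ _ _ H). unfold minus, plus, opp; simpl. ring.
Qed.

Lemma tail (g : R -> R) c a b : good g c -> 0 <= a <= b -> Rabs (RInt g a b) <= c * (exp (- a) - exp (- b)).
Proof.
  intros [Hc Hb] Hab.
  eapply Rle_trans. apply abs_RInt_le. lra. apply exRInt; auto.
  rewrite <- RInt_exp. apply RInt_le. lra.
  apply exRInt. intros s. apply continuous_Rabs_comp. auto.
  apply exRInt. intros s. apply cont_of_ex. auto_derive. auto.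
  intros x Hx. apply Hb. lra.
Qed.

Lemma exp_small (c eps : R) : 0 < eps -> 0 <= c -> forall R0, c / eps <= R0 -> c * exp (- R0) < eps.
Proof.
  intros He Hc R0 HR.
  assert (H1 := exp_ineq1_le R0). assert (Hp := exp_pos R0).
  rewrite exp_Ropp. assert (c <= eps * R0) by (apply Rmult_le_reg_r with (/ eps); [apply Rinv_0_lt_compat; lra|];
     replace (eps * R0 * / eps) with R0 by (field; lra); exact HR).
  apply Rmult_lt_reg_r with (exp R0); auto. rewrite Rmult_assoc, Rinv_l by lra. nra.
Qed.

Lemma Iinf_lim g c : good g c -> is_lim_seq (fun n => RInt g 0 (INR n)) (Iinf g).
Proof.
  intros Hg. assert (Hc0 : 0 <= c).
  { destruct Hg as [_ Hb]. specialize (Hb 0 (Rle_refl 0)). assert (0 <= Rabs (g 0)) by apply Rabs_pos.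
    assert (0 < exp (- 0)) by apply exp_pos. nra. }
  assert (Hex : ex_finite_lim_seq (fun n => RInt g 0 (INR n))).
  { apply ex_lim_seq_cauchy_corr. intros eps.
    destruct (INR_unbounded (c / eps)) as [N HN]. exists N. intros n m Hn Hm.
    assert (Hgen : forall n m, (N <= n)%nat -> (n <= m)%nat -> Rabs (RInt g 0 (INR n) - RInt g 0 (INR m)) < eps).
    { intros n' m' Hn' Hnm.
      assert (E : RInt g 0 (INR m') = RInt g 0 (INR n') + RInt g (INR n') (INR m')).
      { symmetry. apply (RInt_Chasles g 0 (INR n') (INR m')); apply exRInt; apply Hg. }
      rewrite E. replace (RInt g 0 (INR n') - (RInt g 0 (INR n') + RInt g (INR n') (INR m'))) with (- RInt g (INR n') (INR m')) by ring.
      rewrite Rabs_Ropp. eapply Rle_lt_trans. apply tail. exact Hg. split; [apply pos_INR|apply le_INR; auto].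
      assert (0 < exp (- INR m')) by apply exp_pos.
      assert (c * exp (- INR n') < eps). { apply exp_small; auto. apply cond_pos. 
        assert (INR N <= INR n') by (apply le_INR; auto). lra. }
      nra. }
    destruct (le_lt_dec n m). apply Hgen; auto.
    rewrite Rabs_minus_sym. apply Hgen; auto; lia. }
  unfold Iinf. destruct (ex_finite_lim_seq_correct (fun n => RInt g 0 (INR n))) as [H1 _].
  destruct (H1 Hex) as [Hl Hf]. rewrite <- Hf in *. apply Lim_seq_correct in Hl. rewrite <- Hf in Hl. simpl. exact Hl.
Qed.

Lemma Iinf_tail g c R0 : good g c -> 0 <= R0 -> Rabs (Iinf g - RInt g 0 R0) <= c * exp (- R0).
Proof.
  intros Hg HR.
  assert (Hl := Iinf_lim g c Hg).
  assert (H2 : is_lim_seq (fun n => Rabs (RInt g 0 (INR n) - RInt g 0 R0)) (Rabs (Iinf g - RInt g 0 R0))).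
  { apply (is_lim_seq_abs _ (Iinf g - RInt g 0 R0)). apply is_lim_seq_minus'; auto. apply is_lim_seq_const. }
  assert (H3 := fun Hev => is_lim_seq_le_loc _ _ _ _ Hev H2 (is_lim_seq_const (c * exp (- R0)))).
  simpl in H3. apply H3.
  destruct (INR_unbounded R0) as [N HN]. exists N. intros n Hn.
  assert (INR N <= INR n) by (apply le_INR; auto).
  assert (E : RInt g 0 (INR n) = RInt g 0 R0 + RInt g R0 (INR n)).
  { symmetry. apply (RInt_Chasles g 0 R0 (INR n)); apply exRInt; apply Hg. }
  rewrite E. replace (RInt g 0 R0 + RInt g R0 (INR n) - RInt g 0 R0) with (RInt g R0 (INR n)) by lra.
  eapply Rle_trans. apply tail. exact Hg. lra. assert (0 < exp (- INR n)) by apply exp_pos.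
  destruct Hg as [_ Hb]. specialize (Hb 0 (Rle_refl 0)).
  assert (0 <= c). { assert (0 <= Rabs (g 0)) by apply Rabs_pos. assert (0 < exp (- 0)) by apply exp_pos. nra. }
  nra.
Qed.

Lemma eps_lemma (Q A B : R) : 0 <= B -> (forall R0, 0 <= R0 -> Q <= A + B * exp (- R0)) -> Q <= A.
Proof.
  intros HB H. apply Rnot_lt_le; intro Hlt.
  assert (Hd : 0 < Q - A) by lra.
  assert (H1 := H (B / (Q - A)) ltac:(apply Rdiv_le_0_compat; lra)).
  assert (H2 := exp_small B (Q - A) Hd HB (B / (Q - A)) (Rle_refl _)). lra.
Qed.

Lemma Iinf_ge g c R0 : good g c -> 0 <= R0 -> (forall s, 0 <= s -> 0 <= g s) -> RInt g 0 R0 <= Iinf g.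
Proof.
  intros Hg HR Hp.
  assert (Hl := Iinf_lim g c Hg).
  assert (H3 := fun Hev => is_lim_seq_le_loc _ _ _ _ Hev (is_lim_seq_const (RInt g 0 R0)) Hl).
  simpl in H3. apply H3.
  destruct (INR_unbounded R0) as [N HN]. exists N. intros n Hn.
  assert (INR N <= INR n) by (apply le_INR; auto).
  assert (E : RInt g 0 (INR n) = RInt g 0 R0 + RInt g R0 (INR n)).
  { symmetry. apply (RInt_Chasles g 0 R0 (INR n)); apply exRInt; apply Hg. }
  rewrite E. assert (0 <= RInt g R0 (INR n)). { apply RInt_ge_0. lra. apply exRInt; apply Hg. intros; apply Hp; lra. }
  lra.
Qed.

Lemma Iinf_ext f g : (forall s, f s = g s) -> Iinf f = Iinf g.
Proof. intros H. unfold Iinf. f_equal. apply Lim_seq_ext. intros n. apply RInt_ext. intros; auto. Qed.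

Lemma Iinf_scal g c k : good g c -> Iinf (fun s => k * g s) = k * Iinf g.
Proof.
  intros Hg. unfold Iinf at 1.
  rewrite (Lim_seq_ext _ (fun n => k * RInt g 0 (INR n))).
  rewrite (is_lim_seq_unique _ (k * Iinf g)). reflexivity.
  apply (is_lim_seq_scal_l _ k (Iinf g)). apply (Iinf_lim g c Hg).
  intros n. apply (RInt_scal g 0 (INR n) k). apply exRInt; apply Hg.
Qed.


Lemma mvt_any (f df : R -> R) a b :
  (forall t, Rmin a b <= t <= Rmax a b -> is_derive f t (df t)) ->
  exists c, Rmin a b <= c <= Rmax a b /\ f b - f a = df c * (b - a).
Proof.
  intros H. destruct (Rtotal_order a b) as [Hlt|[Heq|Hgt]].
  - destruct (mvt_strict f df a b Hlt) as [c [Hc E]].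
    { intros t Ht. apply H. rewrite (Rmin_left a b), (Rmax_right a b) by lra; lra. }
    exists c. rewrite (Rmin_left a b), (Rmax_right a b) by lra. split; auto; lra.
  - subst. exists b. rewrite (Rmin_left b b), (Rmax_left b b) by lra. split. lra. ring.
  - destruct (mvt_strict f df b a Hgt) as [c [Hc E]].
    { intros t Ht. apply H. rewrite (Rmin_right a b), (Rmax_left a b) by lra; lra. }
    exists c. rewrite (Rmin_right a b), (Rmax_left a b) by lra. split. lra. lra.
Qed.

Lemma taylor1 (f f1 f2 : R -> R) a b M :
  (forall t, Rmin a b <= t <= Rmax a b -> is_derive f t (f1 t) /\ is_derive f1 t (f2 t)) ->
  (forall t, Rmin a b <= t <= Rmax a b -> Rabs (f2 t) <= M) ->
  Rabs (f b - f a - f1 a * (b - a)) <= M * (b - a) ^ 2.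
Proof.
  intros HD HM.
  destruct (mvt_any f f1 a b) as [c [Hc E]]. { intros t Ht; apply HD; auto. }
  destruct (mvt_any f1 f2 a c) as [d [Hd E2]].
  { intros t Ht. apply HD. revert Hc Ht. unfold Rmin, Rmax.
    destruct (Rle_dec a b), (Rle_dec a c); lra. }
  assert (Hd' : Rmin a b <= d <= Rmax a b).
  { revert Hc Hd. unfold Rmin, Rmax.
    destruct (Rle_dec a b), (Rle_dec a c); lra. }
  rewrite E. replace (f1 c * (b - a) - f1 a * (b - a)) with ((f1 c - f1 a) * (b - a)) by ring.
  rewrite E2. specialize (HM d Hd').
  assert (Hca : Rabs (c - a) <= Rabs (b - a)).
  { unfold Rmin, Rmax in Hc. destruct (Rle_dec a b).
    rewrite (Rabs_pos_eq (c-a)), (Rabs_pos_eq (b-a)) by lra; lra.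
    rewrite (Rabs_left1 (c-a)), (Rabs_left1 (b-a)) by lra; lra. }
  rewrite !Rabs_mult. rewrite <- (pow2_abs (b - a)). simpl. rewrite Rmult_1_r.
  assert (0 <= Rabs (f2 d)) by apply Rabs_pos. assert (0 <= Rabs (c - a)) by apply Rabs_pos.
  assert (0 <= Rabs (b - a)) by apply Rabs_pos.
  apply Rle_trans with (M * Rabs (c - a) * Rabs (b - a)).
  - apply Rmult_le_compat_r; auto. apply Rmult_le_compat; auto; lra.
  - assert (0 <= M) by lra. assert (M * Rabs (c - a) <= M * Rabs (b - a)) by (apply Rmult_le_compat_l; auto). nra.
Qed.

Lemma RInt_lin3 (f g h : R -> R) k a b : (forall s, continuous f s) -> (forall s, continuous g s) -> (forall s, continuous h s) ->
  RInt (fun s => f s - g s - k * h s) a b = RInt f a b - RInt g a b - k * RInt h a b.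
Proof.
  intros Hf Hg Hh.
  apply is_RInt_unique.
  apply (@is_RInt_minus R_CompleteNormedModule (fun s => f s - g s) (fun s => k * h s)).
  apply (@is_RInt_minus R_CompleteNormedModule f g); apply RInt_correct; apply exRInt; auto.
  apply (@is_RInt_scal R_CompleteNormedModule h a b k). apply RInt_correct; apply exRInt; auto.
Qed.

Lemma param_deriv (G0 G1 G2 : R -> R -> R) K : 0 <= K ->
  (forall x s, -1 < x -> is_derive (fun x => G0 x s) x (G1 x s) /\ is_derive (fun x => G1 x s) x (G2 x s)) ->
  (forall x, -1 < x -> good (G0 x) K /\ good (G1 x) K /\ good (G2 x) K) ->
  forall x, -1 < x -> is_derive (fun x => Iinf (G0 x)) x (Iinf (G1 x)).
Proof.
  intros HK HD HG x Hx. apply is_derive_Reals. intros eps Heps.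
  assert (Hd : 0 < Rmin ((x + 1) / 2) (eps / (K + 1))).
  { apply Rmin_glb_lt; apply Rdiv_lt_0_compat; lra. }
  exists (mkposreal _ Hd). intros h Hh0 Hh. simpl in Hh.
  assert (Hh1 : Rabs h < (x + 1) / 2) by (eapply Rlt_le_trans; [exact Hh|apply Rmin_l]).
  assert (Hh2 : Rabs h < eps / (K + 1)) by (eapply Rlt_le_trans; [exact Hh|apply Rmin_r]).
  assert (Hxh : -1 < x + h) by (apply Rabs_lt_between in Hh1; lra).
  set (Q := Iinf (G0 (x + h)) - Iinf (G0 x) - h * Iinf (G1 x)).
  assert (HQ : Rabs Q <= K * h ^ 2).
  { apply (eps_lemma _ _ (K * (2 + Rabs h))).
    { assert (0 <= Rabs h) by apply Rabs_pos. nra. }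
    intros R0 HR0.
    destruct (HG x Hx) as [Ga [Gb Gc]]. destruct (HG (x + h) Hxh) as [Ga' [Gb' Gc']].
    set (D := RInt (fun s => G0 (x + h) s - G0 x s - h * G1 x s) 0 R0).
    assert (HD1 : Rabs D <= K * h ^ 2).
    { unfold D. eapply Rle_trans. apply abs_RInt_le. lra.
      apply exRInt. intros s. apply (continuous_minus (fun s => G0 (x + h) s - G0 x s) (fun s => h * G1 x s)).
      apply (continuous_minus (G0 (x+h)) (G0 x)). apply Ga'. apply Ga.
      apply (continuous_scal_r h (G1 x)). apply Gb.
      apply Rle_trans with (RInt (fun s => (K * h ^ 2) * exp (- s)) 0 R0).
      apply RInt_le. lra.
      apply exRInt. intros s. apply continuous_Rabs_comp.
      apply (continuous_minus (fun s => G0 (x + h) s - G0 x s) (fun s => h * G1 x s)).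
      apply (continuous_minus (G0 (x+h)) (G0 x)). apply Ga'. apply Ga.
      apply (continuous_scal_r h (G1 x)). apply Gb.
      apply exRInt. intros s. apply cont_of_ex. auto_derive. auto.
      intros s Hs.
      assert (Ht := taylor1 (fun y => G0 y s) (fun y => G1 y s) (fun y => G2 y s) x (x + h) (K * exp (- s))).
      replace (x + h - x) with h in Ht by ring.
      replace (G0 (x + h) s - G0 x s - h * G1 x s) with (G0 (x + h) s - G0 x s - G1 x s * h) by ring.
      replace (K * h ^ 2 * exp (- s)) with (K * exp (- s) * h ^ 2) by ring.
      apply Ht.
      + intros t Ht'. apply HD. revert Ht'. unfold Rmin, Rmax. destruct (Rle_dec x (x + h)); lra.
      + intros t Ht'. assert (-1 < t) by (revert Ht'; unfold Rmin, Rmax; destruct (Rle_dec x (x + h)); lra).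
        destruct (HG t H) as [_ [_ [_ Hb]]]. apply Hb. lra.
      + rewrite RInt_exp. assert (0 < exp (- R0)) by apply exp_pos. rewrite Ropp_0, exp_0.
        assert (0 <= h ^ 2) by apply pow2_ge_0. assert (0 <= K * h ^ 2) by nra. nra. }
    assert (ED : D = RInt (G0 (x + h)) 0 R0 - RInt (G0 x) 0 R0 - h * RInt (G1 x) 0 R0).
    { unfold D. apply RInt_lin3. apply Ga'. apply Ga. apply Gb. }
    assert (T1 := Iinf_tail _ _ R0 Ga' HR0).
    assert (T2 := Iinf_tail _ _ R0 Ga HR0).
    assert (T3 := Iinf_tail _ _ R0 Gb HR0).
    assert (Hexp : 0 < exp (- R0)) by apply exp_pos.
    replace Q with (D + (Iinf (G0 (x + h)) - RInt (G0 (x + h)) 0 R0) - (Iinf (G0 x) - RInt (G0 x) 0 R0)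
       - h * (Iinf (G1 x) - RInt (G1 x) 0 R0)) by (unfold Q; rewrite ED; ring).
    eapply Rle_trans. apply Rabs_triang. eapply Rle_trans. apply Rplus_le_compat_r. apply Rabs_triang.
    eapply Rle_trans. apply Rplus_le_compat_r. apply Rplus_le_compat_r. apply Rabs_triang.
    rewrite !Rabs_Ropp, Rabs_mult.
    assert (0 <= Rabs h) by apply Rabs_pos.
    assert (Rabs h * Rabs (Iinf (G1 x) - RInt (G1 x) 0 R0) <= Rabs h * (K * exp (- R0))) by (apply Rmult_le_compat_l; auto).
    nra. }
  assert (Hhne : 0 < Rabs h) by (apply Rabs_pos_lt; auto).
  replace ((Iinf (G0 (x + h)) - Iinf (G0 x)) / h - Iinf (G1 x)) with (Q / h) by (unfold Q; field; auto).
  rewrite Rabs_div by auto.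
  apply Rmult_lt_reg_r with (Rabs h); auto. unfold Rdiv. rewrite Rmult_assoc, Rinv_l, Rmult_1_r by lra.
  apply Rle_lt_trans with (K * h ^ 2); auto.
  rewrite <- (pow2_abs h). 
  assert (K * Rabs h < eps).
  { apply Rle_lt_trans with ((K + 1) * Rabs h). nra.
    apply Rmult_lt_reg_r with (/ (K + 1)). apply Rinv_0_lt_compat; lra.
    replace ((K + 1) * Rabs h * / (K + 1)) with (Rabs h) by (field; lra). exact Hh2. }
  simpl. nra.
Qed.


Definition Fk (k : nat) (x s : R) :=
  (-1) ^ k * s ^ k * exp (- s ^ 3 / 3 - x * s / 2) * sin (INR (k + 1) * PI / 3 - sqrt 3 / 2 * x * s).

Definition KK := exp 9.

Lemma F_deriv k x s : is_derive (fun x => Fk k x s) x (Fk (S k) x s).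
Proof.
  assert (E : INR (S k + 1) * PI / 3 - sqrt 3 / 2 * x * s = (INR (k + 1) * PI / 3 - sqrt 3 / 2 * x * s) + PI / 3).
  { rewrite !plus_INR, S_INR. simpl INR. field. }
  unfold Fk. auto_derive. auto. rewrite E.
  rewrite (sin_plus (INR (k + 1) * PI / 3 - sqrt 3 / 2 * x * s) (PI / 3)), sin_PI3, cos_PI3.
  change (INR (k + 1) * PI / 3 + - (sqrt 3 / 2 * x * s)) with (INR (k + 1) * PI / 3 - sqrt 3 / 2 * x * s).
  change (- (s * (s * (s * 1))) / 3 + - (x * s * / 2)) with (- (s * (s * (s * 1))) / 3 - (x * s * / 2)).
  simpl. unfold Rdiv. reqf.
Qed.

Lemma F_cont k x s : continuous (Fk k x) s.
Proof. apply cont_of_ex. unfold Fk. auto_derive. auto. Qed.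

Lemma pow_le_exp3 k s : (k <= 3)%nat -> 0 <= s -> s ^ k <= exp (3 * s).
Proof.
  intros Hk Hs. apply Rle_trans with ((1 + s) ^ 3).
  - destruct k as [|[|[|[|k]]]]; try lia; simpl; nra.
  - replace (exp (3 * s)) with (exp s ^ 3) by (simpl; rewrite Rmult_1_r, <- !exp_plus; f_equal; ring).
    assert (H := exp_ineq1_le s). apply pow_incr. lra.
Qed.

Lemma exp_mono a b : a <= b -> exp a <= exp b.
Proof. intros [H|H]. left; apply exp_increasing; auto. right; subst; auto. Qed.

Lemma core_bound k x s : (k <= 3)%nat -> -1 <= x -> 0 <= s -> s ^ k * exp (- s ^ 3 / 3 - x * s / 2) <= KK * exp (- s).
Proof.
  intros Hk Hx Hs. unfold KK.
  apply Rle_trans with (exp (3 * s) * exp (- s ^ 3 / 3 - x * s / 2)).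
  apply Rmult_le_compat_r. left; apply exp_pos. apply pow_le_exp3; auto.
  rewrite <- !exp_plus. apply exp_mono.
  assert (x * s >= - s) by nra.
  assert (s ^ 3 - 13.5 * s + 27 > 0).
  { assert (0 <= (s - 2.12) ^ 2 * (s + 4.24)) by (apply Rmult_le_pos; [apply pow2_ge_0|lra]). simpl in *. nra. }
  simpl in *. lra.
Qed.

Lemma F_bound k x s : (k <= 3)%nat -> -1 <= x -> 0 <= s -> Rabs (Fk k x s) <= KK * exp (- s).
Proof.
  intros Hk Hx Hs. unfold Fk. rewrite !Rabs_mult.
  rewrite pow_1_abs, Rmult_1_l. rewrite (Rabs_pos_eq (exp _)) by (left; apply exp_pos).
  rewrite <- RPow_abs, (Rabs_pos_eq s) by lra.
  apply Rle_trans with (s ^ k * exp (- s ^ 3 / 3 - x * s / 2) * 1).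
  apply Rmult_le_compat_l. apply Rmult_le_pos. apply pow_le; lra. left; apply exp_pos.
  apply Rabs_le. split; [apply SIN_bound|apply SIN_bound].
  rewrite Rmult_1_r. apply core_bound; auto.
Qed.

Lemma F_good k x : (k <= 3)%nat -> -1 <= x -> good (Fk k x) KK.
Proof. intros Hk Hx. split. apply F_cont. intros s Hs. apply F_bound; auto. Qed.

Definition J k x := Iinf (Fk k x).

Lemma KK_pos : 0 <= KK.
Proof. left; apply exp_pos. Qed.

Lemma J_d0 x : -1 < x -> is_derive (J 0) x (J 1 x).
Proof.
  intros Hx. apply (param_deriv (Fk 0) (Fk 1) (Fk 2) KK KK_pos); auto.
  intros; split; apply F_deriv.
  intros y Hy. repeat split; try apply F_cont; intros s Hs; apply F_bound; auto; lra.
Qed.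

Lemma J_d1 x : -1 < x -> is_derive (J 1) x (J 2 x).
Proof.
  intros Hx. apply (param_deriv (Fk 1) (Fk 2) (Fk 3) KK KK_pos); auto.
  intros; split; apply F_deriv.
  intros y Hy. repeat split; try apply F_cont; intros s Hs; apply F_bound; auto; lra.
Qed.

Lemma RInt_lin2 (f h : R -> R) k a b : (forall s, continuous f s) -> (forall s, continuous h s) ->
  RInt (fun s => f s - k * h s) a b = RInt f a b - k * RInt h a b.
Proof.
  intros Hf Hh.
  apply is_RInt_unique.
  apply (@is_RInt_minus R_CompleteNormedModule f (fun s => k * h s)).
  apply RInt_correct; apply exRInt; auto.
  apply (@is_RInt_scal R_CompleteNormedModule h a b k). apply RInt_correct; apply exRInt; auto.
Qed.

Lemma J_ode x : -1 <= x -> J 2 x = x * J 0 x.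
Proof.
  intros Hx.
  set (P := fun s => - exp (- s ^ 3 / 3 - x * s / 2) * sin (sqrt 3 / 2 * x * s)).
  assert (HP : forall s, is_derive P s (Fk 2 x s - x * Fk 0 x s)).
  { intros s. unfold P, Fk. auto_derive. auto.
    replace (INR (2 + 1) * PI / 3 - sqrt 3 / 2 * x * s) with (PI - sqrt 3 / 2 * x * s) by (simpl; field).
    replace (INR (0 + 1) * PI / 3 - sqrt 3 / 2 * x * s) with (PI / 3 - sqrt 3 / 2 * x * s) by (simpl; field).
    rewrite sin_PI_x, sin_minus, sin_PI3, cos_PI3. unfold Rminus, Rdiv. simpl. reqf. }
  assert (HPc : forall s, continuous (fun s => Fk 2 x s - x * Fk 0 x s) s).
  { intros s. apply cont_of_ex. unfold Fk. auto_derive. auto. }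
  cut (Rabs (J 2 x - x * J 0 x) <= 0).
  { intros H. assert (H0 := Rabs_pos (J 2 x - x * J 0 x)). assert (Rabs (J 2 x - x * J 0 x) = 0) by lra.
    apply Rabs_eq_0 in H1. lra. }
  apply (eps_lemma _ 0 (KK * (2 + Rabs x))).
  { assert (0 <= Rabs x) by apply Rabs_pos. assert (0 <= KK) by apply KK_pos. nra. }
  intros R0 HR0.
  assert (HI : RInt (fun s => Fk 2 x s - x * Fk 0 x s) 0 R0 = P R0 - P 0).
  { apply is_RInt_unique.
    replace (P R0 - P 0) with (minus (P R0) (P 0)) by reflexivity.
    apply (@is_RInt_derive R_CompleteNormedModule P). intros; apply HP. intros; apply HPc. }
  rewrite RInt_lin2 in HI by (intros; apply F_cont).
  assert (HP0 : P 0 = 0) by (unfold P; replace (sqrt 3 / 2 * x * 0) with 0 by ring; rewrite sin_0; ring).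
  assert (HPR : Rabs (P R0) <= KK * exp (- R0)).
  { unfold P. rewrite Rabs_mult, Rabs_Ropp, (Rabs_pos_eq (exp _)) by (left; apply exp_pos).
    apply Rle_trans with (exp (- R0 ^ 3 / 3 - x * R0 / 2) * 1).
    apply Rmult_le_compat_l. left; apply exp_pos. apply Rabs_le. split; apply SIN_bound.
    rewrite Rmult_1_r. replace (exp (- R0 ^ 3 / 3 - x * R0 / 2)) with (R0 ^ 0 * exp (- R0 ^ 3 / 3 - x * R0 / 2)) by (simpl; ring).
    apply core_bound; auto. }
  assert (T2 := Iinf_tail _ _ R0 (F_good 2 x ltac:(lia) Hx) HR0).
  assert (T0 := Iinf_tail _ _ R0 (F_good 0 x ltac:(lia) Hx) HR0).
  fold (J 2 x) in T2. fold (J 0 x) in T0.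
  replace (J 2 x - x * J 0 x) with ((J 2 x - RInt (Fk 2 x) 0 R0) - x * (J 0 x - RInt (Fk 0 x) 0 R0) + P R0)
    by (rewrite HP0 in HI; lra).
  eapply Rle_trans. apply Rabs_triang. eapply Rle_trans. apply Rplus_le_compat_r. apply Rabs_triang.
  rewrite Rabs_Ropp, Rabs_mult.
  assert (0 <= Rabs x) by apply Rabs_pos.
  assert (Rabs x * Rabs (J 0 x - RInt (Fk 0 x) 0 R0) <= Rabs x * (KK * exp (- R0))) by (apply Rmult_le_compat_l; auto).
  assert (0 < exp (- R0)) by apply exp_pos.
  nra.
Qed.

Lemma J_sol : sol (J 0) (J 1).
Proof.
  intros x Hx. split. apply J_d0; lra. rewrite <- J_ode by lra. apply J_d1; lra.
Qed.

Lemma RInt_zero_len (f : R -> R) a : RInt f a a = 0.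
Proof. exact (@RInt_point R_CompleteNormedModule a f). Qed.

Lemma J_bound x : 0 <= x -> Rabs (J 0 x) <= KK.
Proof.
  intros Hx. assert (H := Iinf_tail _ _ 0 (F_good 0 x ltac:(lia) ltac:(lra)) (Rle_refl 0)).
  rewrite RInt_zero_len, Ropp_0, exp_0, Rminus_0_r, Rmult_1_r in H. exact H.
Qed.

Definition A0 := Iinf (fun s => exp (- s ^ 3 / 3)).
Definition A1 := Iinf (fun s => s * exp (- s ^ 3 / 3)).

Lemma g0_good : good (fun s => exp (- s ^ 3 / 3)) KK.
Proof.
  split. intros s; apply cont_of_ex; auto_derive; auto.
  intros s Hs. rewrite Rabs_pos_eq by (left; apply exp_pos).
  replace (exp (- s ^ 3 / 3)) with (s ^ 0 * exp (- s ^ 3 / 3 - 0 * s / 2)) by (simpl; rewrite Rmult_1_l; f_equal; field).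
  apply core_bound; auto; lra.
Qed.

Lemma g1_good : good (fun s => s * exp (- s ^ 3 / 3)) KK.
Proof.
  split. intros s; apply cont_of_ex; auto_derive; auto.
  intros s Hs. rewrite Rabs_pos_eq by (apply Rmult_le_pos; [lra|left; apply exp_pos]).
  replace (s * exp (- s ^ 3 / 3)) with (s ^ 1 * exp (- s ^ 3 / 3 - 0 * s / 2)) by (simpl; rewrite Rmult_1_r; f_equal; f_equal; field).
  apply core_bound; auto; lra.
Qed.

Lemma J0_0 : J 0 0 = sin (PI / 3) * A0.
Proof.
  unfold J, A0. rewrite <- (Iinf_scal _ _ _ g0_good). apply Iinf_ext. intros s. unfold Fk.
  replace (INR (0 + 1) * PI / 3 - sqrt 3 / 2 * 0 * s) with (PI / 3) by (simpl; field).
  replace (- s ^ 3 / 3 - 0 * s / 2) with (- s ^ 3 / 3) by field. simpl. ring.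
Qed.

Lemma J1_0 : J 1 0 = - sin (PI / 3) * A1.
Proof.
  unfold J, A1. rewrite <- (Iinf_scal _ _ _ g1_good). apply Iinf_ext. intros s. unfold Fk.
  replace (INR (1 + 1) * PI / 3 - sqrt 3 / 2 * 0 * s) with (PI - PI / 3) by (simpl; field).
  rewrite sin_PI_x.
  replace (- s ^ 3 / 3 - 0 * s / 2) with (- s ^ 3 / 3) by field. simpl. ring.
Qed.

Lemma A0_pos : 0 < A0.
Proof.
  apply Rlt_le_trans with (RInt (fun s => exp (- s ^ 3 / 3)) 0 1).
  2:{ apply (Iinf_ge _ KK 1 g0_good). lra. intros; left; apply exp_pos. }
  apply Rlt_le_trans with (RInt (fun _ => exp (- 1 / 3)) 0 1).
  - rewrite RInt_const. unfold scal; simpl. unfold mult; simpl. rewrite Rminus_0_r, Rmult_1_l. apply exp_pos.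
  - apply RInt_le. lra. apply exRInt; intros; apply cont_of_ex; auto_derive; auto.
    apply exRInt; apply g0_good.
    intros s Hs. apply exp_mono. assert (s ^ 3 <= 1) by (simpl; nra). lra.
Qed.

Lemma A1_pos : 0 < A1.
Proof.
  apply Rlt_le_trans with (RInt (fun s => s * exp (- s ^ 3 / 3)) 0 1).
  2:{ apply (Iinf_ge _ KK 1 g1_good). lra. intros; apply Rmult_le_pos; [lra|left; apply exp_pos]. }
  apply Rlt_le_trans with (RInt (fun s => exp (- 1 / 3) * s) 0 1).
  - assert (H : is_RInt (fun s => exp (- 1 / 3) * s) 0 1 (minus ((fun s => exp (- 1 / 3) * (s ^ 2 / 2)) 1) ((fun s => exp (- 1 / 3) * (s ^ 2 / 2)) 0))).
    { apply (@is_RInt_derive R_CompleteNormedModule (fun s => exp (- 1 / 3) * (s ^ 2 / 2))).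
      intros x _. auto_derive. auto. simpl. field.
      intros x _. apply cont_of_ex. auto_derive. auto. }
    rewrite (is_RInt_unique _ _ _ _ H). unfold minus, plus, opp; simpl.
    assert (0 < exp (- 1 / 3)) by apply exp_pos. lra.
  - apply RInt_le. lra. apply exRInt; intros; apply cont_of_ex; auto_derive; auto.
    apply exRInt; apply g1_good.
    intros s Hs. rewrite Rmult_comm. apply Rmult_le_compat_l. lra.
    apply exp_mono. assert (s ^ 3 <= 1) by (simpl; nra). lra.
Qed.


Definition sig3 t := Rpower (3 * t) (1 / 3).

Lemma sig3_pos t : 0 < sig3 t.
Proof. unfold sig3, Rpower. apply exp_pos. Qed.

Lemma sig3_cube t : 0 < t -> sig3 t ^ 3 / 3 = t.
Proof.
  intros Ht. unfold sig3. rewrite <- Rpower_pow by (unfold Rpower; apply exp_pos).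
  rewrite Rpower_mult. replace (1 / 3 * INR 3) with 1 by (simpl; field). rewrite Rpower_1 by lra. field.
Qed.

Lemma cube_lt a b : 0 < a -> 0 < b -> a ^ 3 < b ^ 3 -> a < b.
Proof. intros Ha Hb H. apply Rnot_le_lt; intro Hle. assert (b ^ 3 <= a ^ 3) by (apply pow_incr; lra). lra. Qed.

Lemma ball_R (x e y : R) : Rabs (y - x) < e -> @ball R_UniformSpace x e y.
Proof. intros H. exact H. Qed.

Lemma gamma_gen (r c : R) (h : R -> R) :
  good h KK ->
  (forall s, 0 < s -> Rpower (s ^ 3 / 3) (r - 1) * exp (- (s ^ 3 / 3)) * s ^ 2 = c * h s) ->
  is_RInt_gen (fun t => Rpower t (r - 1) * exp (- t)) (at_right 0) (Rbar_locally p_infty) (c * Iinf h).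
Proof.
  intros Hg Hid.
  set (f := fun t => Rpower t (r - 1) * exp (- t)).
  assert (Hfc : forall t, 0 < t -> continuous f t).
  { intros t Ht. apply cont_of_ex. unfold f, Rpower. auto_derive. auto. }
  assert (Hval : forall a b, 0 < a -> 0 < b -> is_RInt f a b (c * RInt h (sig3 a) (sig3 b))).
  { intros a b Ha Hb.
    assert (Hc := @is_RInt_comp R_CompleteNormedModule f (fun y => y ^ 3 / 3) (fun y => y ^ 2) (sig3 a) (sig3 b)).
    cbv beta in Hc. rewrite !sig3_cube in Hc by auto.
    assert (Hmin : 0 < Rmin (sig3 a) (sig3 b)) by (apply Rmin_glb_lt; apply sig3_pos).
    assert (Hc' : is_RInt (fun y => scal (y ^ 2) (f (y ^ 3 / 3))) (sig3 a) (sig3 b) (RInt f a b)).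
    { apply Hc.
      - intros y Hy. apply Hfc. assert (0 < y) by lra. assert (0 < y ^ 3) by (apply pow_lt; lra). lra.
      - intros y Hy. split. auto_derive. auto. field. apply cont_of_ex. auto_derive. auto. }
    assert (E : RInt f a b = c * RInt h (sig3 a) (sig3 b)).
    { rewrite <- (is_RInt_unique _ _ _ _ Hc').
      transitivity (RInt (fun y => c * h y) (sig3 a) (sig3 b)).
      apply RInt_ext. intros y Hy. unfold scal; simpl; unfold mult; simpl. unfold f.
      rewrite <- Hid by lra. simpl. req.
      apply (RInt_scal h (sig3 a) (sig3 b) c). apply exRInt; apply Hg. }
    rewrite <- E. apply (@RInt_correct R_CompleteNormedModule). apply (@ex_RInt_continuous R_CompleteNormedModule).
    intros z Hz. apply Hfc. assert (0 < Rmin a b) by (apply Rmin_glb_lt; auto). lra. }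
  intros P [eps HP].
  assert (HK : 0 <= KK) by apply KK_pos.
  set (d1 := eps / (2 * (Rabs c + 1) * (KK + 1))).
  assert (Hd1 : 0 < d1) by (unfold d1; apply Rdiv_lt_0_compat; [apply cond_pos|assert (0 <= Rabs c) by apply Rabs_pos; nra]).
  set (b0 := 2 * (Rabs c + 1) * KK / eps + 1).
  assert (Hb0 : 1 <= b0) by (unfold b0; assert (0 <= Rabs c) by apply Rabs_pos; assert (0 < eps) by apply cond_pos;
     assert (0 <= 2 * (Rabs c + 1) * KK / eps) by (apply Rdiv_le_0_compat; nra); lra).
  apply (Filter_prod _ _ _ (fun a => 0 < a < d1 ^ 3 / 3) (fun b => b0 ^ 3 / 3 < b)).
  - assert (Hd3 : 0 < d1 ^ 3 / 3) by (assert (0 < d1 ^ 3) by (apply pow_lt; lra); lra).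
    exists (mkposreal _ Hd3). intros y Hy Hy0. simpl in Hy. unfold ball in Hy; simpl in Hy.
    unfold AbsRing_ball, abs, minus, plus, opp in Hy; simpl in Hy.
    rewrite Ropp_0, Rplus_0_r in Hy. apply Rabs_lt_between in Hy. lra.
  - exists (b0 ^ 3 / 3). auto.
  - intros a b [Ha1 Ha2] Hb. simpl.
    assert (Hb' : 0 < b) by (assert (0 < b0 ^ 3) by (apply pow_lt; lra); lra).
    exists (c * RInt h (sig3 a) (sig3 b)). split. apply Hval; auto.
    apply HP. apply ball_R.
    set (al := sig3 a). set (be := sig3 b).
    assert (Hal : al < d1).
    { apply cube_lt. apply sig3_pos. auto. unfold al. assert (H := sig3_cube a Ha1). lra. }
    assert (Hbe : b0 < be).
    { apply cube_lt. lra. apply sig3_pos. unfold be. assert (H := sig3_cube b Hb'). lra. }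
    assert (Hal0 : 0 < al) by apply sig3_pos.
    assert (Ech : RInt h 0 be = RInt h 0 al + RInt h al be).
    { symmetry. apply (RInt_Chasles h 0 al be); apply exRInt; apply Hg. }
    assert (T1 := Iinf_tail h KK be Hg ltac:(lra)).
    assert (T2 := tail h KK 0 al Hg ltac:(lra)).
    rewrite Ropp_0, exp_0 in T2.
    assert (Hea : 1 - al <= exp (- al)) by (assert (H := exp_ineq1_le (- al)); lra).
    assert (Hsm : KK * exp (- be) < eps / (2 * (Rabs c + 1))).
    { apply exp_small. apply Rdiv_lt_0_compat. apply cond_pos. assert (0 <= Rabs c) by apply Rabs_pos. lra. auto.
      assert (0 <= Rabs c) by apply Rabs_pos. assert (0 < eps) by apply cond_pos.
      apply Rle_trans with b0; [|lra]. unfold b0.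
      replace (KK / (eps / (2 * (Rabs c + 1)))) with (2 * (Rabs c + 1) * KK / eps) by (field; lra).
      lra. }
    assert (Hc0 : 0 <= Rabs c) by apply Rabs_pos. assert (Heps : 0 < eps) by apply cond_pos.
    assert (Hs1 : Rabs (RInt h 0 al) < eps / (2 * (Rabs c + 1))).
    { apply Rle_lt_trans with (KK * al). 
      { apply Rle_trans with (KK * (1 - exp (- al))); auto. apply Rmult_le_compat_l; lra. }
      apply Rle_lt_trans with (KK * d1). apply Rmult_le_compat_l; lra.
      unfold d1. replace (KK * (eps / (2 * (Rabs c + 1) * (KK + 1)))) with
        ((eps / (2 * (Rabs c + 1))) * (KK / (KK + 1))) by (field; lra).
      assert (Hq : KK / (KK + 1) < 1).
      { apply Rmult_lt_reg_r with (KK + 1). lra. unfold Rdiv. rewrite Rmult_assoc, Rinv_l by lra. lra. }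
      assert (0 < eps / (2 * (Rabs c + 1))) by (apply Rdiv_lt_0_compat; lra). nra. }
    rewrite Rabs_minus_sym in T1.
    replace (c * RInt h al be - c * Iinf h) with (c * ((RInt h 0 be - Iinf h) - RInt h 0 al)) by (rewrite Ech; ring).
    rewrite Rabs_mult.
    assert (Hsum : Rabs (RInt h 0 be - Iinf h - RInt h 0 al) < eps / (Rabs c + 1)).
    { eapply Rle_lt_trans. apply Rabs_triang. rewrite Rabs_Ropp.
      replace (eps / (Rabs c + 1)) with (eps / (2 * (Rabs c + 1)) + eps / (2 * (Rabs c + 1))) by (field; lra).
      lra. }
    apply Rle_lt_trans with (Rabs c * (eps / (Rabs c + 1))).
    apply Rmult_le_compat_l; lra.
    replace (Rabs c * (eps / (Rabs c + 1))) with (eps * (Rabs c / (Rabs c + 1))) by (field; lra).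
    assert (Rabs c / (Rabs c + 1) < 1).
    { apply Rmult_lt_reg_r with (Rabs c + 1). lra. unfold Rdiv. rewrite Rmult_assoc, Rinv_l by lra. lra. }
    nra.
Qed.

Lemma ln_cube3 s : 0 < s -> ln (s ^ 3 / 3) = 3 * ln s - ln 3.
Proof. intros Hs. rewrite ln_div by (try apply pow_lt; lra). rewrite ln_pow by lra. simpl. ring. Qed.

Lemma id13 s : 0 < s -> Rpower (s ^ 3 / 3) (1 / 3 - 1) * exp (- (s ^ 3 / 3)) * s ^ 2 =
  Rpower 3 (2 / 3) * exp (- s ^ 3 / 3).
Proof.
  intros Hs. unfold Rpower. rewrite ln_cube3 by auto.
  replace ((1 / 3 - 1) * (3 * ln s - ln 3)) with (2 / 3 * ln 3 + - ln s + - ln s) by field.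
  rewrite !exp_plus, exp_Ropp, exp_ln by auto.
  replace (- (s ^ 3 / 3)) with (- s ^ 3 / 3) by field. field. lra.
Qed.

Lemma id23 s : 0 < s -> Rpower (s ^ 3 / 3) (2 / 3 - 1) * exp (- (s ^ 3 / 3)) * s ^ 2 =
  Rpower 3 (1 / 3) * (s * exp (- s ^ 3 / 3)).
Proof.
  intros Hs. unfold Rpower. rewrite ln_cube3 by auto.
  replace ((2 / 3 - 1) * (3 * ln s - ln 3)) with (1 / 3 * ln 3 + - ln s) by field.
  rewrite !exp_plus, exp_Ropp, exp_ln by auto.
  replace (- (s ^ 3 / 3)) with (- s ^ 3 / 3) by field. field. lra.
Qed.


Lemma Gamma13 : Gamma (1 / 3) = Rpower 3 (2 / 3) * A0.
Proof. unfold Gamma. apply is_RInt_gen_unique. apply gamma_gen. apply g0_good. apply id13. Qed.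

Lemma Gamma23 : Gamma (2 / 3) = Rpower 3 (1 / 3) * A1.
Proof. unfold Gamma. apply is_RInt_gen_unique. apply gamma_gen. apply g1_good. apply id23. Qed.

Lemma R3 : Rpower 3 (2 / 3) * Rpower 3 (1 / 3) = 3.
Proof. rewrite <- Rpower_plus. replace (2 / 3 + 1 / 3) with 1 by field. apply Rpower_1. lra. Qed.

Lemma c1_val : airy_c1 = / (3 * A1).
Proof. unfold airy_c1. rewrite Gamma23, <- Rmult_assoc, R3. reflexivity. Qed.

Lemma c2_val : airy_c2 = / (3 * A0).
Proof. unfold airy_c2. rewrite Gamma13, <- Rmult_assoc, Rmult_comm with (r1 := Rpower 3 (1 / 3)), R3. reflexivity. Qed.

Lemma c1_pos : 0 < airy_c1.
Proof. rewrite c1_val. apply Rinv_0_lt_compat. assert (H := A1_pos). lra. Qed.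
Lemma c2_pos : 0 < airy_c2.
Proof. rewrite c2_val. apply Rinv_0_lt_compat. assert (H := A0_pos). lra. Qed.

Lemma Ai_sol : sol Ai Ai1.
Proof. intros x _. split. apply Ai_d1. apply Ai_d2. Qed.
Lemma Bi_sol : sol Bi Bi1.
Proof. intros x _. split. apply Bi_d1. apply Bi_d2. Qed.

Lemma Ai_bounded : exists M, forall x, 0 <= x -> Rabs (Ai x) <= M.
Proof.
  assert (Hs3 : 0 < sin (PI / 3)) by (rewrite sin_PI3; assert (0 < sqrt 3) by (apply sqrt_lt_R0; lra); lra).
  assert (HA0 := A0_pos). assert (HA1 := A1_pos).
  set (k := airy_c1 / (sin (PI / 3) * A0)).
  set (d := fun x => Ai x - k * J 0 x). set (d1 := fun x => Ai1 x - k * J 1 x).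
  assert (Hd : sol d d1).
  { intros x Hx. destruct (J_sol x Hx) as [J1' J2']. split.
    - apply (dminus Ai (fun x => k * J 0 x)). apply Ai_d1. apply dscal; auto.
    - eapply deq. apply (dminus Ai1 (fun x => k * J 1 x)). apply Ai_d2. apply dscal; eauto. unfold d; req. }
  assert (Hz : forall x, 0 <= x -> d x = 0).
  { apply (sol_unique d d1 0 Hd (Rle_refl 0)).
    - unfold d. rewrite Ai_0, J0_0. unfold k. field. lra.
    - unfold d1. rewrite Ai1_0, J1_0. unfold k. rewrite c1_val, c2_val. field. lra. }
  exists (Rabs k * KK). intros x Hx.
  assert (E : Ai x = k * J 0 x) by (specialize (Hz x Hx); unfold d in Hz; lra).
  rewrite E, Rabs_mult. apply Rmult_le_compat_l. apply Rabs_pos. apply J_bound; auto.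
Qed.

Theorem lemma2p8 (mu : R) (hmu : 0 <= mu) :
  let C := - ((mu * Bi (mu ^ 2) + Derive Bi (mu ^ 2)) /
              (mu * Ai (mu ^ 2) + Derive Ai (mu ^ 2))) in
  let phi := fun x => PI * exp (mu * x) * Ai (mu ^ 2 + x) in
  let psi := fun x => C * exp (mu * x) * Ai (mu ^ 2 + x) + exp (mu * x) * Bi (mu ^ 2 + x) in
  (forall x y, 0 <= x -> x < y -> phi y < phi x) /\
  (forall x y, 0 <= x -> x < y -> psi x < psi y).
Proof.
  rewrite (is_derive_unique _ _ _ (Bi_d1 (mu ^ 2))).
  rewrite (is_derive_unique _ _ _ (Ai_d1 (mu ^ 2))).
  destruct Ai_bounded as [M HM].
  assert (HAs : forall x, 0 <= x -> 0 < Ai x /\ Ai1 x < 0).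
  { apply (sol_sign Ai Ai1 M Ai_sol Ai_cont HM). rewrite Ai_0. apply c1_pos. }
  assert (HBs : forall x, 0 <= x -> 0 < Bi x /\ 0 < Bi1 x).
  { apply (sol_grow Bi Bi1 Bi_sol Bi_cont).
    rewrite Bi_0. apply Rmult_lt_0_compat. apply sqrt_lt_R0; lra. apply c1_pos.
    rewrite Bi1_0. apply Rmult_lt_0_compat. apply sqrt_lt_R0; lra. apply c2_pos. }
  exact (final_abs Ai Ai1 Bi Bi1 mu hmu Ai_sol Bi_sol HAs HBs).
Qed.
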